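(* Let $\varepsilon>0$ and let $P,Q$ be distributions on $\mathcal{X}$ with disjoint supports. Then $\operatorname{scLLR}_{-\varepsilon',\varepsilon}$ and $\operatorname{ncLLR}_{-\varepsilon',\varepsilon}$ are asymptotically optimal (up to constant factors in sample complexity) among all $\varepsilon$-differentially private tests, and $$\mathit{SC}^{P,Q}(\operatorname{scLLR}_{-\varepsilon',\varepsilon})=\mathit{SC}^{P,Q}(\operatorname{ncLLR}_{-\varepsilon',\varepsilon})=\Theta(1/\varepsilon).$$
   Context: Distributions are identified with densities. A randomized test $K:\mathcal{X}^*\to\{\text{''}P\text{''},\text{''}Q\text{''}\}$ is $\varepsilon$-differentially private if for every $n$, all $x,x'\in\mathcal{X}^n$ differing in one entry and every output $o$, $\Pr[K(x)=o]\le e^{\varepsilon}\Pr[K(x')=o]$. $\mathit{SC}^{P,Q}(K)$ is the least $n_0$ such that $\Pr_{x\sim P^n}[K(x)=\text{''}P\text{''}]-\Pr_{x\sim Q^n}[K(x)=\text{''}P\text{''}]\ge2/3$ for all $n\ge n_0$. $\tau=\max\{\int\max\{P-e^{\varepsilon}Q,0\},\int\max\{Q-e^{\varepsilon}P,0\}\}$, with the standing convention (swap names otherwise) that $\tau=\int\max\{P-e^{\varepsilon}Q,0\}$; $\varepsilon'\in[0,\varepsilon]$ is the largest value with $\int\max\{Q(x)-e^{\varepsilon'}P(x),0\}\mathrm{d}x=\tau$. For $a\le b$, $[z]_a^b=\max(a,\min(z,b))$, and $\operatorname{cLLR}_{a,b}(x_1,\dots,x_n)=\sum_i[\log\frac{P(x_i)}{Q(x_i)}]_a^b$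 with $\log(p/0)=+\infty$, $\log(0/q)=-\infty$. $\operatorname{scLLR}_{a,b}(x)$ outputs ''$P$'' with probability $\frac{\exp(\frac12\operatorname{cLLR}_{a,b}(x))}{1+\exp(\frac12\operatorname{cLLR}_{a,b}(x))}$ and ''$Q$'' otherwise. $\operatorname{ncLLR}_{-\varepsilon',\varepsilon}(x)$ outputs ''$P$'' if $\operatorname{cLLR}_{-\varepsilon',\varepsilon}(x)+Z>0$ and ''$Q$'' otherwise, with fresh $Z\sim\mathrm{Lap}(2)$. *)

(* Defs.v *)
From HB Require Import structures.
From mathcomp Require Import all_boot all_order all_algebra.
From mathcomp Require Import all_classical all_reals all_analysis.
Set Implicit Arguments. Unset Strict Implicit. Unset Printing Implicit Defensive.
Import Order.TTheory GRing.Theory Num.Theory.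
Import numFieldNormedType.Exports.
Local Open Scope classical_set_scope.
Local Open Scope ring_scope.

Section Defs.
Context {R : realType} {d : measure_display} {X : measurableType d}.
Variable mu : {measure set X -> \bar R}.

Definition is_density (p : X -> R) : Prop :=
  measurable_fun setT p /\ (forall x, 0 <= p x) /\
  (\int[mu]_x (p x)%:E = 1)%E.

(* expectation of f : X^n -> R under the product distribution p^n,
   written as an iterated integral (first coordinate outermost) *)
Fixpoint prod_expect (p : X -> R) (n : nat) : (n.-tuple X -> R) -> \bar R :=
  match n return (n.-tuple X -> R) -> \bar R with
  | 0 => fun f => (f [tuple])%:E
  | k.+1 => fun f =>
      (\int[mu]_x ((p x)%:E * prod_expect p (fun t : k.-tuple X => f (cons_tuple x t))))%E
  end.

(* A randomized test K : X^* -> {"P","Q"} is represented by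
   K n x = Pr[K(x) = "P"] in [0,1] for x in X^n. *)
Definition rtest := forall n : nat, n.-tuple X -> R.

Definition is_rtest (K : rtest) : Prop :=
  forall n (x : n.-tuple X), 0 <= K n x <= 1.

Definition neighbors n (x x' : n.-tuple X) : Prop :=
  exists i : 'I_n, forall j : 'I_n, j != i -> tnth x j = tnth x' j.

(* epsilon-DP, for both outputs "P" (prob K) and "Q" (prob 1 - K) *)
Definition is_DP (eps : R) (K : rtest) : Prop :=
  is_rtest K /\
  forall n (x x' : n.-tuple X), neighbors x x' ->
    K n x <= expR eps * K n x' /\ 1 - K n x <= expR eps * (1 - K n x').

Definition advantage (p q : X -> R) (K : rtest) (n : nat) : \bar R :=
  (prod_expect p (K n) - prod_expect q (K n))%E.

Definition succeeds_from (p q : X -> R) (K : rtest) (n0 : nat) : Prop :=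
  forall n, (n0 <= n)%N -> ((2 / 3 : R)%:E <= advantage p q K n)%E.

Definition SC_is (p q : X -> R) (K : rtest) (m : nat) : Prop :=
  succeeds_from p q K m /\ forall m', succeeds_from p q K m' -> (m <= m')%N.

Definition hockey (p q : X -> R) (e : R) : \bar R :=
  (\int[mu]_x (Num.max (p x - expR e * q x) 0)%:E)%E.

Definition tau (p q : X -> R) (eps : R) : \bar R :=
  Order.max (hockey p q eps) (hockey q p eps).

Definition eps' (p q : X -> R) (eps : R) : R :=
  sup [set e : R | 0 <= e <= eps /\ hockey q p e = tau p q eps].

Definition clamp (a b z : R) : R := Num.max a (Num.min z b).

(* [log (p x / q x)]_a^b with log(p/0) = +oo, log(0/q) = -oo;
   the undefined case p x = q x = 0 is (arbitrarily) given log = 0. *)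
Definition clip_llr (p q : X -> R) (a b : R) (x : X) : R :=
  if p x == 0 then (if q x == 0 then clamp a b 0 else a)
  else if q x == 0 then b
  else clamp a b (ln (p x / q x)).

Definition cLLR (p q : X -> R) (a b : R) n (x : n.-tuple X) : R :=
  \sum_(i < n) clip_llr p q a b (tnth x i).

Definition scLLR_test (p q : X -> R) (a b : R) : rtest :=
  fun n x => expR (cLLR p q a b x / 2) / (1 + expR (cLLR p q a b x / 2)).

Definition lap2_density (z : R) : R := expR (- `|z| / 2) / 4.

Definition ncLLR_test (p q : X -> R) (a b : R) : rtest :=
  fun n x => fine (\int[@lebesgue_measure R]_(z in [set z : R | (0 < cLLR p q a b x + z)%R])
                     (lap2_density z)%:E)%E.

Definition scLLR (p q : X -> R) (eps : R) : rtest :=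
  scLLR_test p q (- eps' p q eps) eps.
Definition ncLLR (p q : X -> R) (eps : R) : rtest :=
  ncLLR_test p q (- eps' p q eps) eps.

End Defs.

(* Main.v *)
Require Import Defs.
From HB Require Import structures.
From mathcomp Require Import all_boot all_order all_algebra.
From mathcomp Require Import all_classical all_reals all_analysis.
From mathcomp Require Import measurable_realfun ring lra.
Import Order.TTheory GRing.Theory Num.Theory.
Import numFieldNormedType.Exports.
Local Open Scope classical_set_scope.
Local Open Scope ring_scope.


Section A.
Context {R : realType} {d : measure_display} {X : measurableType d}.
Variable mu : {measure set X -> \bar R}.

Lemma cLLR_cons (p q : X -> R) a b k x (t : k.-tuple X) :
  cLLR p q a b [tuple of x :: t] = clip_llr p q a b x + cLLR p q a b t.
Proof.
rewrite /cLLR big_ord_recl tnth0; congr (_ + _).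
by apply: eq_bigr => i _; rewrite tnthS.
Qed.

Lemma int_dens_cst (p : X -> R) (c : R) : is_density mu p -> 0 <= c ->
  (\int[mu]_x ((p x)%:E * c%:E) = c%:E)%E.
Proof.
move=> [mp [p0 ip]] c0.
rewrite ge0_integralZr//.
- by rewrite ip mul1e.
- exact/measurable_EFinP.
- by move=> x _; rewrite lee_fin.
Qed.

Lemma le_int_nm (f g : X -> \bar R) : (forall x, (0 <= f x)%E) ->
  (forall x, (f x <= g x)%E) -> (\int[mu]_x f x <= \int[mu]_x g x)%E.
Proof.
move=> f0 fg.
have g0 x : (0 <= g x)%E by apply: le_trans (f0 x) (fg x).
rewrite !ge0_integralE//; apply: ereal_sup_le => _ [h hf <-].
exists h => // x; apply: le_trans (hf x) _.
by rewrite /patch /=; case: ifP.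
Qed.

Lemma pe_clip (r p q : X -> R) a b v (h : R -> R) :
  is_density mu r -> (forall c, 0 <= h c) ->
  (forall x, r x != 0 -> clip_llr p q a b x = v) ->
  forall k c, prod_expect mu r (fun t : k.-tuple X => h (c + cLLR p q a b t))
     = (h (c + k%:R * v))%:E.
Proof.
move=> pd h0 Hb; elim=> [|k IH] c /=.
  by rewrite /cLLR big_ord0 mul0r.
transitivity (\int[mu]_x ((r x)%:E * (h (c + k.+1%:R * v))%:E))%E; last first.
  by rewrite int_dens_cst.
apply: eq_integral => x _.
have [->|px] := eqVneq (r x) 0; first by rewrite !mul0e.
congr (_ * _)%E.
have -> : (fun t : k.-tuple X => h (c + cLLR p q a b [tuple of x :: t])) =
          (fun t => h ((c + v) + cLLR p q a b t)).
  by apply: funext => t; rewrite cLLR_cons Hb // addrA.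
by rewrite IH -natr1 mulrDl mul1r addrA addrAC.
Qed.

Lemma pe_bounds {p : X -> R} {lo hi : R} : is_density mu p -> 0 <= lo ->
  forall k (f : k.-tuple X -> R), (forall t, lo <= f t <= hi) ->
  (lo%:E <= prod_expect mu p f <= hi%:E)%E.
Proof.
move=> pd lo0; elim=> [|k IH] f fb /=; first by rewrite !lee_fin fb.
have hi0 : 0 <= hi.
  have /andP[h1 h2] := fb [tuple of nseq k.+1 point].
  exact: le_trans lo0 (le_trans h1 h2).
case: pd => [mp [p0 ip]].
have IHx x : (lo%:E <= prod_expect mu p (fun t : k.-tuple X => f [tuple of x :: t]) <= hi%:E)%E.
  by apply: IH => t; exact: fb.
apply/andP; split.
  rewrite -[X in (X <= _)%E](@int_dens_cst p lo) //.
  apply: le_int_nm => x; first by rewrite mule_ge0 // lee_fin.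
  by apply: lee_wpmul2l; [rewrite lee_fin|case/andP: (IHx x)].
rewrite -[X in (_ <= X)%E](@int_dens_cst p hi) //.
apply: le_int_nm => x.
  apply: mule_ge0; first by rewrite lee_fin.
  by case/andP: (IHx x) => + _; apply: le_trans; rewrite lee_fin.
by apply: lee_wpmul2l; [rewrite lee_fin|case/andP: (IHx x)].
Qed.


Lemma dp_chain (eps : R) (K : @rtest R d X) : is_DP eps K -> 0 <= eps ->
  forall n (x y : n.-tuple X), K n x <= expR (n%:R * eps) * K n y.
Proof.
move=> [Kr DP] e0 n x y.
pose z (j : nat) : n.-tuple X := [tuple (if (i < j)%N then tnth y i else tnth x i) | i < n].
have z0 : z 0%N = x by apply: eq_from_tnth => i; rewrite tnth_mktuple.
have zn : z n = y by apply: eq_from_tnth => i; rewrite tnth_mktuple ltn_ord.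
suff H j : (j <= n)%N -> K n x <= expR (j%:R * eps) * K n (z j).
  by rewrite -zn; apply: H.
elim: j => [|j IH] jn; first by rewrite mul0r expR0 mul1r z0.
have jn' : (j < n)%N by [].
have nb : neighbors (z j) (z j.+1).
  exists (Ordinal jn') => i /eqP ij; rewrite !tnth_mktuple.
  have ij' : (nat_of_ord i != j) by apply/eqP => h; apply: ij; apply: val_inj.
  by rewrite [in RHS]ltnS [in RHS]leq_eqVlt (negbTE ij').
have [h1 _] := DP _ _ _ nb.
apply: (le_trans (IH (ltnW jn))).
rewrite -natr1 mulrDl mul1r expRD -mulrA ler_wpM2l ?expR_ge0 //.
Qed.

Lemma ebnd {e : \bar R} {lo hi : R} : (lo%:E <= e <= hi%:E)%E ->
  exists r, e = r%:E /\ lo <= r <= hi.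
Proof.
case: e => [r| |] //=.
- by rewrite !lee_fin => h; exists r.
- by rewrite leye_eq andbF.
Qed.

Lemma dp_adv (p q : X -> R) (eps : R) (K : @rtest R d X) n :
  is_density mu p -> is_density mu q -> is_DP eps K -> 0 <= eps ->
  ((2/3 : R)%:E <= advantage mu p q K n)%E -> 1/3 <= n%:R * eps.
Proof.
move=> pd qd DP e0 adv.
have Kr := DP.1.
pose y0 : n.-tuple X := [tuple of nseq n point].
pose c := K n y0.
pose u := expR (n%:R * eps); pose w := expR (- (n%:R * eps)).
have uw : u * w = 1 by rewrite /u /w -expRD subrr expR0.
have w0 : 0 < w by apply: expR_gt0.
have w1 : w <= 1 by rewrite /w -expR0 ler_expR lerNl oppr0 mulr_ge0.
have u1 : 1 <= u by rewrite /u -expR0 ler_expR mulr_ge0.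
have c0 : 0 <= c by case/andP: (Kr n y0).
have [a [ea /andP[a0 a1]]] := ebnd (pe_bounds pd (lexx 0) _ _ (fun t => Kr n t)).
have [a' [ea' /andP[_ a2]]] : exists r, prod_expect mu p (K n) = r%:E /\ 0 <= r <= u * c.
  apply: ebnd; apply: pe_bounds => // t.
  by case/andP: (Kr n t) => -> _ /=; exact: dp_chain.
have [b [eb /andP[b1 _]]] : exists r, prod_expect mu q (K n) = r%:E /\ c * w <= r <= 1.
  apply: ebnd; apply: pe_bounds => //; first by rewrite mulr_ge0 // ltW.
  move=> t; case/andP: (Kr n t) => _ -> ; rewrite andbT.
  have := @dp_chain eps K DP e0 n y0 t; rewrite -/u -/c => h.
  apply: (le_trans (ler_wpM2r (ltW w0) h)).
  by rewrite mulrAC uw mul1r.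
move: adv; rewrite /advantage ea eb -EFinD lee_fin => adv.
move: ea'; rewrite ea => -[aa']; subst a'.
have ww : w * w <= 1/3.
  have [h|h] := lerP (u * c) 1.
    have : c <= w by nra.
    nra.
  have : w <= c by nra.
  nra.
have : 1 - (n%:R * eps) * 2 <= w * w.
  by rewrite /w -expRD; apply: le_trans (expR_ge1Dx _); lra.
lra.
Qed.


Section disj.
Variables (p q : X -> R).
Hypotheses (pd : is_density mu p) (qd : is_density mu q)
  (dj : forall x, p x = 0 \/ q x = 0).

Lemma hockey_pq e : hockey mu p q e = 1%E.
Proof.
case: pd => [_ [p0 ip]]; rewrite /hockey -ip; apply: eq_integral => x _.
case: qd => [_ [q0 _]]; congr (_%:E).
case: (dj x) => ->; last by rewrite mulr0 subr0 max_l // p0.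
by rewrite sub0r max_r // oppr_le0 mulr_ge0 // expR_ge0.
Qed.

Lemma hockey_qp e : hockey mu q p e = 1%E.
Proof.
case: qd => [_ [q0 iq]]; rewrite /hockey -iq; apply: eq_integral => x _.
case: pd => [_ [p0 _]]; congr (_%:E).
case: (dj x) => ->; first by rewrite mulr0 subr0 max_l // q0.
by rewrite sub0r max_r // oppr_le0 mulr_ge0 // expR_ge0.
Qed.

Lemma eps'_eq eps : 0 <= eps -> eps' mu p q eps = eps.
Proof.
move=> e0; rewrite /eps' /tau hockey_pq hockey_qp maxxx.
rewrite -[X in _ = X](sup_itvcc e0); congr sup.
apply/seteqP; split => e /=; rewrite in_itv /=.
  by case.
by move=> h; split => //; rewrite hockey_qp.
Qed.

Lemma clipP a b x : p x != 0 -> clip_llr p q a b x = b.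
Proof.
move=> px; rewrite /clip_llr (negbTE px).
by case: (dj x) => [/eqP|->]; [rewrite (negbTE px)|rewrite eqxx].
Qed.

Lemma clipQ a b x : q x != 0 -> clip_llr p q a b x = a.
Proof.
move=> qx; rewrite /clip_llr.
case: (dj x) => [->|/eqP]; last by rewrite (negbTE qx).
by rewrite eqxx (negbTE qx).
Qed.

Lemma adv_gen eps (h : R -> R) (K : @rtest R d X) : 0 <= eps -> (forall c, 0 <= h c) ->
  (forall n t, K n t = h (cLLR p q (- eps' mu p q eps) eps t)) ->
  forall n, advantage mu p q K n = (h (n%:R * eps) - h (- (n%:R * eps)))%:E.
Proof.
move=> e0 h0 Kh n; rewrite /advantage.
have -> : K n = (fun t => h (0 + cLLR p q (- eps' mu p q eps) eps t)).
  by apply: funext => t; rewrite Kh add0r.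
rewrite (@pe_clip p p q _ _ _ h pd h0 (@clipP _ _)).
rewrite (@pe_clip q p q _ _ _ h qd h0 (@clipQ _ _)) eps'_eq // !add0r mulrN.
by rewrite -EFinD.
Qed.

End disj.


Lemma SC_gen (p q : X -> R) (K : @rtest R d X) eps (A : nat -> R) (c1 T : R) :
  0 < eps -> 0 < T ->
  (forall n, advantage mu p q K n = (A n)%:E) ->
  (forall m n, (m <= n)%N -> 2/3 <= A m -> 2/3 <= A n) ->
  (forall n, 2/3 <= A n -> c1 <= n%:R * eps) ->
  (forall n, T <= n%:R * eps -> 2/3 <= A n) ->
  exists n1, [/\ SC_is mu p q K n1, c1 / eps <= n1%:R & n1%:R <= T / eps + 1].
Proof.
move=> e0 T0 adv mono lb ub.
pose N := (Num.trunc (T / eps)).+1.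
have TN : T / eps <= N%:R - 1 + 1.
  have /andP[_ h] := truncn_itv (ltW (divr_gt0 T0 e0)).
  by rewrite subrK ltW.
have NT : N%:R - 1 <= T / eps.
  have /andP[h _] := truncn_itv (ltW (divr_gt0 T0 e0)).
  by rewrite /N -natr1 addrK.
have exP : exists n, 2/3 <= A n.
  exists N; apply: ub; rewrite -ler_pdivrMr //; move: TN; rewrite subrK //.
case: (ex_minnP exP) => n1 Pn1 minn1.
exists n1; split.
- split.
  + by move=> n nn1; rewrite adv lee_fin; exact: mono Pn1.
  + move=> m' sm'; apply: minn1.
    by have := sm' m' (leqnn _); rewrite adv lee_fin.
- by rewrite ler_pdivrMr //; exact: lb.
- apply: le_trans (_ : N%:R <= _).
    by rewrite ler_nat; apply: minn1; apply: ub; rewrite -ler_pdivrMr //; move: TN; rewrite subrK.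
  by move: NT; rewrite lerBlDr.
Qed.

End A.

Section Lap.
Context {R : realType}.
Local Notation leb := (@lebesgue_measure R).

Lemma is_derive_expRM (k x : R) : is_derive x 1 (fun y => expR (k * y)) (k * expR (k * x)).
Proof.
have dl : derivable (fun y : R => k * y) x 1 by [].
have de : derivable (@expR R) (k * x) 1 by exact: derivable_expR.
apply: DeriveDef.
  apply/derivable1_diffP.
  apply: (@differentiable_comp _ _ _ _ (fun y : R => k * y) expR); exact/derivable1_diffP.
rewrite -derive1E (derive1_comp dl de).
rewrite [X in X * _]derive1E (@derive_val _ _ _ _ _ _ _ (is_derive_expR (k * x))) mulrC.
congr (_ * _).
rewrite derive1E.
rewrite -[RHS]mulr1; exact: (@derive_val _ _ _ _ _ _ _ (is_deriveZ k (is_derive_id x 1))).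
Qed.
Lemma is_derive_cexpR (a k x : R) :
  is_derive x 1 (fun y => a * expR (k * y)) (a * (k * expR (k * x))).
Proof. exact: (is_deriveZ a (is_derive_expRM k x)). Qed.

Lemma cont_cexpR (a k : R) : continuous (fun y => a * expR (k * y)).
Proof.
move=> x; apply: differentiable_continuous; apply/derivable1_diffP.
exact: (@ex_derive _ _ _ _ _ _ _ (is_derive_cexpR a k x)).
Qed.

Lemma der_cexpR (a k x : R) :
  derive1 (fun y => a * expR (k * y)) x = a * (k * expR (k * x)).
Proof. by rewrite derive1E (@derive_val _ _ _ _ _ _ _ (is_derive_cexpR a k x)). Qed.

Lemma cvg_cexpR (a : R) : (fun y => a * expR (- 2^-1 * y)) x @[x --> +oo] --> 0.
Proof.
rewrite -(mulr0 a); apply: cvgM; first exact: cvg_cst.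
rewrite (_ : (fun x => expR (- 2^-1 * x)) =
             (fun z => expR (- z)) \o (fun z => 2^-1 * z)); last first.
  by apply: funext => x /=; rewrite mulNr.
apply: (@cvg_comp _ _ _ _ _ _ (pinfty_nbhs R)); last exact: cvgr_expR.
by apply: gt0_cvgMry => //; exact: cvg_id.
Qed.

Lemma meas_lap : measurable_fun [set: R] (@lap2_density R).
Proof.
rewrite /lap2_density; apply: measurable_funM => //.
apply: measurableT_comp => //; apply: measurable_funM => //.
apply: measurableT_comp; first exact: oppr_measurable.
exact: normr_measurable.
Qed.

Lemma lap_ge0 (z : R) : 0 <= lap2_density z.
Proof. by rewrite /lap2_density divr_ge0 // expR_ge0. Qed.

Lemma int_tail (c : R) : 0 <= c ->
  (\int[leb]_(z in `[c, +oo[) (lap2_density z)%:E = (expR (- c / 2) / 2)%:E)%E.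
Proof.
move=> c0.
transitivity (\int[leb]_(z in `[c, +oo[) ((4^-1 * expR (- 2^-1 * z)))%:E)%E.
  apply: eq_integral => z; rewrite inE /= in_itv /= andbT => cz.
  rewrite /lap2_density ger0_norm ?(le_trans c0 cz) //; congr (_%:E).
  by rewrite mulrC !mulNr (mulrC z).
rewrite (@ge0_continuous_FTC2y _ (fun z => 4^-1 * expR (- 2^-1 * z))
   (fun z => - 2^-1 * expR (- 2^-1 * z)) c 0).
- by rewrite -EFinB sub0r mulNr opprK mulrC mulNr [_ * c]mulrC mulNr.
- by move=> x _; rewrite mulr_ge0 // expR_ge0.
- by apply: continuous_subspaceT; exact: cont_cexpR.
- exact: cvg_cexpR.
- by move=> x _; exact: (@ex_derive _ _ _ _ _ _ _ (is_derive_cexpR _ _ x)).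
- by apply: cvg_at_right_filter; exact: cont_cexpR.
- move=> x _; rewrite der_cexpR mulrA; congr (_ * _).
  by field.
Qed.


Lemma L_neg (c : R) : 0 <= c ->
  (\int[leb]_(z in [set z | (0 < - c + z)%R]) (lap2_density z)%:E = (expR (- c / 2) / 2)%:E)%E.
Proof.
move=> c0.
have -> : [set z : R | 0 < - c + z] = `]c, +oo[%classic.
  by apply/seteqP; split => z; rewrite /= in_itv /= andbT addrC subr_gt0.
rewrite integral_itv_obnd_cbnd; first exact: int_tail.
by apply/measurable_EFinP/measurable_funTS; exact: meas_lap.
Qed.

Lemma L_pos (c : R) : 0 < c ->
  (\int[leb]_(z in [set z | (0 < c + z)%R]) (lap2_density z)%:E = (1 - expR (- c / 2) / 2)%:E)%E.
Proof.
move=> c0.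
have -> : [set z : R | 0 < c + z] = `]-c, 0[%classic `|` `[0, +oo[%classic.
  apply/seteqP; split => z /=.
    move=> h; have [zn|zp] := ltP z 0; [left|right]; rewrite in_itv /= ?andbT.
      by apply/andP; split; lra.
    by [].
  by case; rewrite in_itv /= ?andbT; [move/andP=> [h1 h2]|move=> h]; lra.
have mlap : forall A, measurable_fun A (fun z => (@lap2_density R z)%:E).
  by move=> A; apply/measurable_EFinP/measurable_funTS; exact: meas_lap.
rewrite ge0_integral_setU //=; last 3 first.
- exact: mlap.
- by move=> z _; rewrite lee_fin lap_ge0.
- apply/disj_setPS => z [] /=; rewrite !in_itv /= andbT => /andP[_ h1] h2; lra.
rewrite int_tail // integral_itv_obnd_cbnd // integral_itv_bndo_bndc //.
transitivity (\int[leb]_(z in `[(- c)%R, 0%R]) ((4^-1 * expR (2^-1 * z))%R)%:E +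
   ((expR (- 0 / 2) / 2)%R)%:E)%E.
  congr (_ + _)%E; apply: eq_integral => z; rewrite inE /= in_itv /= => /andP[_ z0].
  rewrite /lap2_density ler0_norm //; congr (_%:E).
  by rewrite mulrC opprK (mulrC z).
rewrite (@continuous_FTC2 _ (fun z => 4^-1 * expR (2^-1 * z))
   (fun z => 2^-1 * expR (2^-1 * z)) (- c) 0).
- rewrite -!EFinB -EFinD; congr (_%:E).
  rewrite mulr0 oppr0 mul0r expR0 mulrN (mulrC _ c) [in RHS]mulNr; lra.
- by rewrite oppr_lt0.
- by apply: continuous_subspaceT; exact: cont_cexpR.
- split.
  + by move=> x _; exact: (@ex_derive _ _ _ _ _ _ _ (is_derive_cexpR _ _ x)).
  + by apply: cvg_at_right_filter; exact: cont_cexpR.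
  + by apply: cvg_at_left_filter; exact: cont_cexpR.
- move=> x _; rewrite der_cexpR mulrA; congr (_ * _).
  by field.
Qed.

End Lap.

Section Reals.
Context {R : realType}.

Definition sig (c : R) := expR (c / 2) / (1 + expR (c / 2)).

Lemma sig_iff (x : R) : (2/3 <= sig x - sig (- x)) = (5 <= expR (x / 2)).
Proof.
rewrite /sig.
set v := expR (x / 2).
have -> : expR (- x / 2) = v^-1 by rewrite mulNr expRN.
have v0 : 0 < v by apply: expR_gt0.
have -> : v / (1 + v) - v^-1 / (1 + v^-1) = (v - 1) / (v + 1).
  by field; apply/andP; split; rewrite ?lt0r_neq0 // ?addr_gt0 // ?invr_gt0 // addrC ?addr_gt0.
rewrite ler_pdivlMr; last by rewrite addr_gt0.
apply/idP/idP => h; lra.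
Qed.

Lemma sig_ge0 (c : R) : 0 <= sig c.
Proof. by rewrite /sig divr_ge0 // ?addr_ge0 // expR_ge0. Qed.

End Reals.

Section NC.
Context {R : realType}.
Definition hL (c : R) := fine (\int[@lebesgue_measure R]_(z in [set z : R | (0 < c + z)%R]) (lap2_density z)%:E)%E.

Lemma hL_ge0 c : 0 <= hL c.
Proof. by rewrite /hL fine_ge0 // integral_ge0 // => z _; rewrite lee_fin lap_ge0. Qed.

Lemma hL_diff (c : R) : 0 <= c -> hL c - hL (- c) = 1 - expR (- c / 2).
Proof.
rewrite le_eqVlt => /predU1P[<-|c0].
  by rewrite oppr0 subrr mul0r expR0 subrr.
rewrite /hL L_pos // L_neg ?ltW //=; lra.
Qed.
End NC.

Theorem theoremC1 (R : realType) :
  exists c1 c2 C : R, [/\ 0 < c1, 0 < c2, 0 < C &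
  forall (d : measure_display) (X : measurableType d)
         (mu : {measure set X -> \bar R}) (p q : X -> R) (eps : R),
    0 < eps -> is_density mu p -> is_density mu q ->
    (forall x, p x = 0 \/ q x = 0) ->
    exists n1 n2 : nat,
      [/\ SC_is mu p q (scLLR mu p q eps) n1,
          SC_is mu p q (ncLLR mu p q eps) n2,
          (eps <= 1 ->
             [/\ c1 / eps <= n1%:R, n1%:R <= c2 / eps,
                 c1 / eps <= n2%:R & n2%:R <= c2 / eps]) &
          (forall (K : @rtest R d X) (m : nat), is_DP eps K -> SC_is mu p q K m ->
             n1%:R <= C * m%:R /\ n2%:R <= C * m%:R)]].
Proof.
exists 1, 9, 25; split; rewrite ?ltr01 ?ltr0n //.
move=> d X mu p q eps e0 pd qd dj.
have e0' := ltW e0.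
have [n1 [SC1 lb1 ub1]] : exists n1, [/\ SC_is mu p q (scLLR mu p q eps) n1,
    1 / eps <= n1%:R & n1%:R <= 8 / eps + 1].
  apply: (@SC_gen R d X mu p q _ eps (fun n => sig (n%:R * eps) - sig (- (n%:R * eps)))) => //.
  - by apply: (@adv_gen R d X mu p q pd qd dj eps sig) => //; exact: sig_ge0.
  - move=> m n mn; rewrite !sig_iff => h; apply: le_trans h _.
    by rewrite ler_expR ler_wpM2r // ?invr_ge0 // ler_wpM2r // ler_nat.
  - move=> n; rewrite sig_iff => h.
    have wv : expR (- (n%:R * eps / 2)) * expR (n%:R * eps / 2) = 1.
      by rewrite -expRD addNr expR0.
    have := expR_ge1Dx (- (n%:R * eps / 2)).
    have := expR_gt0 (- (n%:R * eps / 2)).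
    nra.
  - by move=> n h; rewrite sig_iff; apply: le_trans (expR_ge1Dx _); lra.
have [n2 [SC2 lb2 ub2]] : exists n2, [/\ SC_is mu p q (ncLLR mu p q eps) n2,
    1 / eps <= n2%:R & n2%:R <= 8 / eps + 1].
  apply: (@SC_gen R d X mu p q _ eps (fun n => hL (n%:R * eps) - hL (- (n%:R * eps)))) => //.
  - by apply: (@adv_gen R d X mu p q pd qd dj eps hL) => //; exact: hL_ge0.
  - move=> m n mn; rewrite !hL_diff ?mulr_ge0 // => h.
    have : expR (- (n%:R * eps) / 2) <= expR (- (m%:R * eps) / 2).
      by rewrite ler_expR ler_wpM2r // ?invr_ge0 // lerN2 ler_wpM2r // ler_nat.
    lra.
  - move=> n; rewrite hL_diff ?mulr_ge0 // => h.
    have := expR_ge1Dx (- (n%:R * eps) / 2); lra.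
  - move=> n h; rewrite hL_diff ?mulr_ge0 //.
    have wv : expR (- (n%:R * eps) / 2) * expR (n%:R * eps / 2) = 1.
      by rewrite -expRD mulNr addNr expR0.
    have := expR_ge1Dx (n%:R * eps / 2).
    have := expR_gt0 (- (n%:R * eps) / 2).
    nra.
have ye : eps * eps^-1 = 1 by rewrite mulfV // lt0r_neq0.
have y0 : 0 < eps^-1 by rewrite invr_gt0.
exists n1, n2; split => //.
- move=> e1.
  have y1 : 1 <= eps^-1 by nra.
  rewrite !mul1r; move: lb1 lb2 ub1 ub2; rewrite !mul1r => lb1 lb2 ub1 ub2.
  by split => //; lra.
- move=> K m DP SC.
  have h := @dp_adv R d X mu p q eps K m pd qd DP e0' (SC.1 m (leqnn m)).
  have hy : eps^-1 <= 3 * m%:R by nra.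
  have m1 : 1 <= m%:R :> R.
    by case: m {SC hy} h => [|m]; rewrite ?mul0r ?ler1n //; lra.
  by split; lra.
Qed.
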